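(* Let $n\ge 3$ and let $G$ be a labeled star graph $K_{1,n-1}$ with vertex set $[n]$. Then $X(G;\mathbf{x},q)$ is palindromic if and only if $n$ is odd and the central vertex (the unique vertex of degree greater than $1$) is labeled $\frac{n+1}{2}$.
   Context: A labeled graph is a finite simple graph with vertex set $[n]$. A proper coloring is $c\colon[n]\to\{1,2,\dots\}$ with adjacent vertices colored differently; $\operatorname{asc}(c)=\#\{ij\in E: i<j,\ c(i)<c(j)\}$. The CQF is $X(G;\mathbf{x},q)=\sum_{c \text{ proper}} x_{c(1)}\cdots x_{c(n)}q^{\operatorname{asc}(c)}$. It is palindromic if, with $m=|E|$, the coefficient of $q^k$ (a quasisymmetric function) equals the coefficient of $q^{m-k}$ for every $k$. *)

(* Defs.v *)
From mathcomp Require Import all_boot.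
Set Implicit Arguments. Unset Strict Implicit. Unset Printing Implicit Defensive.

(* Labeled graphs on vertex set [n], encoded as 'I_n (vertex i : 'I_n has
   label i+1), edge relation e : rel 'I_n.  Colours: c : 'I_n -> 'I_N,
   colour j : 'I_N stands for the positive integer j+1 (variable x_{j+1}). *)

Section CQF.
Variable n : nat.
Variable e : rel 'I_n.

Definition nedges : nat := #|[set p : 'I_n * 'I_n | e p.1 p.2 && (p.1 < p.2)]|.

Definition proper (N : nat) (c : {ffun 'I_n -> 'I_N}) : bool :=
  [forall i, forall j, e i j ==> (c i != c j)].

Definition asc (N : nat) (c : {ffun 'I_n -> 'I_N}) : nat :=
  #|[set p : 'I_n * 'I_n | [&& e p.1 p.2, p.1 < p.2 & c p.1 < c p.2]]|.

(* Coefficient of the monomial x_1^{al 0} ... x_N^{al (N-1)} q^k in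
   X(G; x, q) = sum_{c proper} x_{c(1)}...x_{c(n)} q^{asc c}.
   Every colouring contributing to this monomial takes values in [N]. *)
Definition cqf_coeff (N : nat) (al : {ffun 'I_N -> nat}) (k : nat) : nat :=
  #|[set c : {ffun 'I_n -> 'I_N} |
      [&& proper c, [forall j, #|[set i | c i == j]| == al j] & asc c == k]]|.

Definition cqf_palindromic : Prop :=
  forall (N : nat) (al : {ffun 'I_N -> nat}) (k : nat),
    k <= nedges -> cqf_coeff al k = cqf_coeff al (nedges - k).

End CQF.

Definition is_star (n : nat) (e : rel 'I_n) (v : 'I_n) : Prop :=
  forall i j : 'I_n, e i j = (i != j) && ((i == v) || (j == v)).

(* Main.v *)
Require Import Defs.
From mathcomp Require Import all_boot.
From mathcomp Require Import zify.

Set Implicit Arguments. Unset Strict Implicit. Unset Printing Implicit Defensive.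

Section Rev.
Variable n : nat.
Variable e : rel 'I_n.
Hypothesis esym : forall i j, e i j = e j i.
Hypothesis erev : forall i j, e (rev_ord i) (rev_ord j) = e i j.

Definition revc N (c : {ffun 'I_n -> 'I_N}) : {ffun 'I_n -> 'I_N} :=
  [ffun i => c (rev_ord i)].

Lemma rev_lt (i j : 'I_n) : (rev_ord i < rev_ord j) = (j < i).
Proof. rewrite /=. have := ltn_ord i; have := ltn_ord j. lia. Qed.

Lemma asc_split N (c : {ffun 'I_n -> 'I_N}) : Defs.proper e c ->
  asc e c + #|[set p : 'I_n * 'I_n | [&& e p.1 p.2, p.1 < p.2 & c p.2 < c p.1]]|
  = nedges e.
Proof.
move=> /forallP pc.
rewrite /nedges -(cardsID [set p : 'I_n * 'I_n | c p.1 < c p.2]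
  [set p : 'I_n * 'I_n | e p.1 p.2 && (p.1 < p.2)]) /asc.
congr (_ + _); apply: eq_card => -[i j]; rewrite !inE /=.
  by case: (e i j); case: (i < j).
case eij: (e i j); case: (i < j) => //=; rewrite ?andbF ?andbT //.
have := pc i; move/forallP/(_ j); rewrite eij /= => hne.
have hne' : (c i : nat) != c j by [].
move: hne'; case: ltngtP => //.
Qed.

Lemma asc_rev N (c : {ffun 'I_n -> 'I_N}) : Defs.proper e c ->
  asc e (revc c) + asc e c = nedges e.
Proof.
move=> pc; rewrite addnC -(asc_split pc); congr (_ + _).
pose f (p : 'I_n * 'I_n) := (rev_ord p.2, rev_ord p.1).
have finj : injective f.
  move=> [a b] [a' b'] [] h1 h2.
  have := ltn_ord a; have := ltn_ord b; have := ltn_ord a'; have := ltn_ord b'.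
  move=> *; congr pair; apply: val_inj => /=; lia.
rewrite /asc -(card_preimset _ finj); apply: eq_card => -[x y].
by rewrite !inE /= !ffunE erev esym rev_lt !rev_ordK.
Qed.

Lemma proper_rev N (c : {ffun 'I_n -> 'I_N}) : Defs.proper e c -> Defs.proper e (revc c).
Proof.
move=> /forallP pc; apply/forallP => i; apply/forallP => j; apply/implyP => hij.
rewrite !ffunE. have := pc (rev_ord i); move/forallP/(_ (rev_ord j)).
by rewrite erev hij.
Qed.

Lemma content_rev N (c : {ffun 'I_n -> 'I_N}) j :
  #|[set i | revc c i == j]| = #|[set i | c i == j]|.
Proof.
rewrite -[RHS](card_preimset _ (@rev_ord_inj n)); apply: eq_card => i.
by rewrite !inE ffunE.
Qed.

Lemma coeff_le N (al : {ffun 'I_N -> nat}) k : k <= nedges e ->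
  cqf_coeff e al k <= cqf_coeff e al (nedges e - k).
Proof.
move=> hk; rewrite /cqf_coeff.
have rinj : injective (@revc N).
  move=> c1 c2 h; apply/ffunP => i.
  by have := congr1 (fun f : {ffun 'I_n -> 'I_N} => f (rev_ord i)) h; rewrite !ffunE rev_ordK.
rewrite -(card_imset _ rinj); apply: subset_leq_card.
apply/subsetP => x /imsetP [c]; rewrite inE => /and3P [pc ct /eqP ac] ->.
rewrite inE proper_rev //=.
apply/andP; split.
  apply/forallP => j; rewrite content_rev. exact: (forallP ct j).
have := asc_rev pc; rewrite ac => h. apply/eqP. lia.
Qed.

End Rev.


Lemma card_lt n (v : 'I_n) : #|[set i : 'I_n | i < v]| = v.
Proof.
have h : v <= n by exact: ltnW (ltn_ord v).
have winj : injective (widen_ord h) by move=> a b /(congr1 val) /= /val_inj.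
rewrite -[RHS](card_ord v) -(card_imset _ winj).
apply: eq_card => i; rewrite inE; apply/idP/imsetP.
  move=> hi; exists (Ordinal hi) => //; exact: val_inj.
by move=> [j _ ->] /=.
Qed.

Lemma card_lt_gt n (v : 'I_n) :
  #|[set i : 'I_n | i < v]| + #|[set i : 'I_n | v < i]| + 1 = n.
Proof.
have := cardsC [set i : 'I_n | i < v]; rewrite card_ord => hC.
rewrite -[X in _ = X]hC.
have -> : ~: [set i : 'I_n | i < v] = v |: [set i : 'I_n | v < i].
  apply/setP => i; rewrite !inE -leqNgt leq_eqVlt eq_sym.
  by rewrite -val_eqE.
rewrite cardsU1 inE ltnn /=. lia.
Qed.

Lemma card_fst n (v : 'I_n) (P : pred 'I_n) :
  #|[set p : 'I_n * 'I_n | (p.1 == v) && P p.2]| = #|[set j | P j]|.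
Proof.
have inj : injective (fun j : 'I_n => (v, j)) by move=> a b [].
rewrite -(card_imset _ inj); apply: eq_card => -[a b]; rewrite !inE /=.
apply/idP/imsetP.
  by case/andP => /eqP -> hb; exists b; rewrite ?inE.
by case=> j; rewrite inE => hj [-> ->]; rewrite eqxx.
Qed.

Lemma card_snd n (v : 'I_n) (P : pred 'I_n) :
  #|[set p : 'I_n * 'I_n | P p.1 && (p.2 == v)]| = #|[set j | P j]|.
Proof.
have inj : injective (fun j : 'I_n => (j, v)) by move=> a b [].
rewrite -(card_imset _ inj); apply: eq_card => -[a b]; rewrite !inE /=.
apply/idP/imsetP.
  by case/andP => ha /eqP ->; exists a; rewrite ?inE.
by case=> j; rewrite inE => hj [-> ->]; rewrite eqxx andbT.
Qed.

Lemma I2 (x : 'I_2) : (x == ord0) || (x == ord_max).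
Proof. by case: x => [[|[|m]] h]. Qed.

Lemma I2n (x : 'I_2) : x != ord0 -> x = ord_max.
Proof. by case: x => [[|[|m]] h] //= _; apply: val_inj. Qed.

Theorem proposition5p1 (n : nat) (hn : 3 <= n) (e : rel 'I_n) (v : 'I_n)
    (hstar : is_star e v) :
  cqf_palindromic e <-> (odd n /\ (v : nat).+1 = (n.+1)./2).
Proof.
have esym : forall i j, e i j = e j i.
  by move=> i j; rewrite !hstar eq_sym orbC.
split.
  move=> pal.
  set A := #|[set i : 'I_n | i < v]|. set B := #|[set i : 'I_n | v < i]|.
  have hAB := card_lt_gt v. have hA := card_lt v. rewrite -/A -/B in hAB hA.
  pose c0 : {ffun 'I_n -> 'I_2} := [ffun i => if i == v then ord0 else ord_max].
  pose al : {ffun 'I_2 -> nat} := [ffun j => if j == ord0 then 1 else n.-1].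
  have pc0 : Defs.proper e c0.
    apply/forallP=> i; apply/forallP => j; apply/implyP; rewrite hstar !ffunE.
    by case: (i =P v) => [->|hi]; case: (j =P v) => [->|hj] //=; rewrite ?eqxx ?andbF.
  have ac0 : asc e c0 = B.
    rewrite /asc; transitivity #|[set p : 'I_n * 'I_n | (p.1 == v) && (v < p.2)]|;
      last exact: (card_fst v (fun j => v < j)).
    apply: eq_card => -[x y].
    rewrite !inE /= hstar !ffunE.
    case: (x =P v) => [->|hx]; case: (y =P v) => [->|hy] //=; rewrite ?eqxx //=.
    all: rewrite ?ltnn ?andbF ?andbT ?andbF //.
    by move/eqP: hy; rewrite eq_sym => ->.
  have oc0 : #|[set p : 'I_n * 'I_n | [&& e p.1 p.2, p.1 < p.2 & c0 p.2 < c0 p.1]]| = A.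
    transitivity #|[set p : 'I_n * 'I_n | (p.1 < v) && (p.2 == v)]|;
      last exact: (card_snd v (fun j => j < v)).
    apply: eq_card => -[x y].
    rewrite !inE /= hstar !ffunE.
    case: (x =P v) => [->|hx]; case: (y =P v) => [->|hy] //=; rewrite ?eqxx //=.
    all: rewrite ?ltnn ?andbF ?andbT ?andbF //.
    by move/eqP: hx => ->.
  have hned : nedges e = B + A by rewrite -(asc_split pc0) ac0 oc0.
  have := pal 2 al B; rewrite hned addKn => /(_ (leq_addr _ _)) hpal.
  have c0in : c0 \in [set c : {ffun 'I_n -> 'I_2} |
      [&& Defs.proper e c, [forall j, #|[set i | c i == j]| == al j] & asc e c == B]].
    rewrite inE pc0 ac0 eqxx andbT /=; apply/forallP => j; rewrite ffunE.
    case/orP: (I2 j) => /eqP ->.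
      rewrite eqxx; apply/eqP; transitivity #|[set v]|; last exact: cards1.
      apply: eq_card => i; rewrite !inE ffunE.
      by case: (i == v).
    rewrite /=; apply/eqP; transitivity #|[set~ v]|; last by rewrite cardsC1 card_ord.
    apply: eq_card => i; rewrite !inE ffunE.
    by case: (i == v).
  have : 0 < cqf_coeff e al A.
    rewrite -hpal /cqf_coeff; apply/card_gt0P; by exists c0.
  case/card_gt0P => c; rewrite inE => /and3P [pc ct /eqP ac].
  have hc0 : c v = ord0.
    apply/eqP; apply/negPn/negP => hv.
    have hcv := I2n hv.
    have := forallP ct ord0; rewrite ffunE eqxx => /eqP h1.
    have : #|[set~ v]| <= #|[set i | c i == ord0]|.
      apply: subset_leq_card; apply/subsetP => i; rewrite !inE => hi.
      have := forallP (forallP pc i) v; rewrite hstar hi eqxx orbT /= hcv.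
      by case/orP: (I2 (c i)) => /eqP ->.
    rewrite h1 cardsC1 card_ord. lia.
  have cc0 : c = c0.
    apply/ffunP => i; rewrite ffunE; case: (i =P v) => [->//|/eqP hi].
    apply: I2n; have := forallP (forallP pc i) v.
    by rewrite hstar hi eqxx orbT /= hc0.
  have hAB' : A = B by rewrite -ac cc0 ac0.
  split.
    have h1 : n %% 2 = 1 by lia.
    by rewrite modn2 in h1; case: (odd n) h1.
  rewrite -divn2; lia.
move=> [hodd hv].
have hv2 : n - v.+1 = v.
  have h2 : n %% 2 = 1 by rewrite modn2 hodd.
  move: hv; rewrite -divn2. lia.
have hvr : rev_ord v = v by apply: val_inj; rewrite /= hv2.
have erev : forall i j, e (rev_ord i) (rev_ord j) = e i j.
  move=> i j; rewrite !hstar (inj_eq (@rev_ord_inj n)).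
  by rewrite !(can2_eq (@rev_ordK n) (@rev_ordK n)) hvr.
move=> N al k hk; apply/eqP; rewrite eqn_leq coeff_le //=.
have := coeff_le esym erev al (leq_subr k (nedges e)).
by rewrite subKn.
Qed.
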